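(* In the multi-agent combinatorial-actions contract model (described in the context) with a subadditive reward function $f$, the optimal single-agent contract is an $O(n)$-approximation of the optimal unconstrained contract: there exist a contract $\boldsymbol{\alpha}$ with $\alpha_i=0$ for all but at most one agent $i$, and a pure Nash equilibrium $S$ of $\boldsymbol{\alpha}$, such that $$\Big(1-\sum_i\alpha_i\Big)f(S)\ \ge\ \Omega\!\left(\frac1n\right)\max_{\boldsymbol{\alpha}^\star,\,S^\star\in\mathsf{NE}(\boldsymbol{\alpha}^\star)}\Big(1-\sum_i\alpha^\star_i\Big)f(S^\star).$$
   Context: Model: principal and agents $A=[n]$; each agent $i$ has a finite action set $T_i$ (pairwise disjoint), $T=\bigsqcup_iT_i$, costs $c_j\ge0$, $c(S_i)=\sum_{j\in S_i}c_j$. Reward $f:2^T\to[0,1]$ monotone, $f(\emptyset)=0$; subadditive means $f(S)+f(S')\ge f(S\cup S')$. Contract $\boldsymbol{\alpha}\in[0,1]^A$; agent $i$'s utility $\alpha_if(S)-c(S\cap T_i)$; $S\in\mathsf{NE}(\boldsymbol{\alpha})$ (pure Nash equilibrium) if no agent can gain by changing her own subset of actions. Principal's utility $(1-\sum_i\alpha_i)f(S)$. The $\Omega(\cdot)$ hides a universal constant. *)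

(* Defs.v *)
From HB Require Import structures.
From mathcomp Require Import all_boot all_order all_algebra.
From mathcomp Require Import reals.
Set Implicit Arguments. Unset Strict Implicit. Unset Printing Implicit Defensive.
Import Order.TTheory GRing.Theory Num.Theory.
Local Open Scope ring_scope.

Section Model.
Variables (R : realType) (n : nat) (T : finType).

(* [own j] is the agent owning action j; T_i = acts own i (pairwise disjoint,
   their disjoint union is T). *)
Definition acts (own : T -> 'I_n) (i : 'I_n) : {set T} := [set j | own j == i].

Definition cost (c : T -> R) (A : {set T}) : R := \sum_(j in A) c j.

Definition monotone_reward (f : {set T} -> R) : Prop :=
  forall S S' : {set T}, S \subset S' -> f S <= f S'.

Definition subadditive (f : {set T} -> R) : Prop :=
  forall S S' : {set T}, f (S :|: S') <= f S + f S'.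

Definition agent_util (f : {set T} -> R) (c : T -> R) (own : T -> 'I_n)
  (alpha : 'I_n -> R) (i : 'I_n) (S : {set T}) : R :=
  alpha i * f S - cost c (S :&: acts own i).

Definition is_NE (f : {set T} -> R) (c : T -> R) (own : T -> 'I_n)
  (alpha : 'I_n -> R) (S : {set T}) : Prop :=
  forall (i : 'I_n) (S' : {set T}), S' \subset acts own i ->
    agent_util f c own alpha i ((S :\: acts own i) :|: S')
    <= agent_util f c own alpha i S.

Definition is_contract (alpha : 'I_n -> R) : Prop :=
  forall i, 0 <= alpha i <= 1.

Definition single_agent (alpha : 'I_n -> R) : Prop :=
  exists i0 : 'I_n, forall i, i != i0 -> alpha i = 0.

Definition principal_util (f : {set T} -> R) (alpha : 'I_n -> R) (S : {set T}) : R :=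
  (1 - \sum_i alpha i) * f S.

End Model.

(* Main.v *)
Require Import Defs.
From HB Require Import structures.
From mathcomp Require Import all_boot all_order all_algebra.
From mathcomp Require Import reals.
From mathcomp Require classical_sets.
From mathcomp Require Import lra.
Import Order.TTheory GRing.Theory Num.Theory.
Local Open Scope ring_scope.

Theorem theoremC1 :
  exists C : nat, (0 < C)%N /\
  forall (R : realType) (n : nat) (T : finType) (own : T -> 'I_n)
         (c : T -> R) (f : {set T} -> R),
    (0 < n)%N ->
    (forall j, 0 <= c j) ->
    (forall S, 0 <= f S <= 1) ->
    f set0 = 0 ->
    monotone_reward f ->
    subadditive f ->
    exists (alpha : 'I_n -> R) (S : {set T}),
      is_contract alpha /\ single_agent alpha /\ is_NE f c own alpha S /\
      forall (alpha' : 'I_n -> R) (S' : {set T}),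
        is_contract alpha' -> is_NE f c own alpha' S' ->
        principal_util f alpha S >= (C * n)%:R^-1 * principal_util f alpha' S'.
Proof.
exists 76%N; split => //.
move=> R n T own c f hn c0 f01 f0 fmono fsub.
pose i0 := Ordinal hn.
have f_ge0 : forall S, 0 <= f S by move=> S; case/andP: (f01 S).
have f_le1 : forall S, f S <= 1 by move=> S; case/andP: (f01 S).
have cost_ge0 : forall A, 0 <= cost c A by move=> A; apply: sumr_ge0 => j _.
have cost0 : cost c set0 = 0 by rewrite /cost big_set0.
have BR : forall (i : 'I_n) (t : R), exists2 B : {set T}, B \subset acts own i &
   forall B' : {set T}, B' \subset acts own i -> t * f B' - cost c B' <= t * f B - cost c B.
  move=> i t.
  case: (@arg_maxP _ _ {set T} set0 (fun B => B \subset acts own i)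
          (fun B => t * f B - cost c B) (sub0set _)) => B HB Hmax.
  by exists B.
pose al (i : 'I_n) (t : R) := fun j : 'I_n => if j == i then t else 0.
have sum_al : forall i t, \sum_j al i t j = t.
  move=> i t; rewrite (bigD1 i) //= /al eqxx big1 ?addr0 //.
  by move=> j /negbTE ->.
have NE_al : forall i t (B : {set T}), B \subset acts own i ->
   (forall B' : {set T}, B' \subset acts own i -> t * f B' - cost c B' <= t * f B - cost c B) ->
   is_NE f c own (al i t) B.
  move=> i t B HB Hmax j S' HS'; rewrite /agent_util /al.
  move: HS'; case: eqP => [-> HS'|/eqP ji HS'].
    have -> : (B :\: acts own i) :|: S' = S'.
      apply/setP => x; rewrite in_setU in_setD.
      by case: (x \in acts own i) (subsetP HB x) => //=; case: (x \in B) => // /(_ isT).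
    have -> : S' :&: acts own i = S' by exact/setIidPl.
    have -> : B :&: acts own i = B by exact/setIidPl.
    exact: Hmax.
  have -> : B :&: acts own j = set0.
    apply/setP => x; rewrite in_setI in_set0.
    case xB: (x \in B) => //=.
    have := subsetP HB x xB; rewrite !inE => /eqP ->.
    by rewrite eq_sym (negbTE ji).
  by rewrite cost0 !mul0r subr0 sub0r lerNl oppr0.
have contract_al : forall i t, 0 <= t <= 1 -> is_contract (al i t).
  by move=> i t ht j; rewrite /al; case: eqP => // _; rewrite lexx ler01.
have single_al : forall i t, single_agent (al i t).
  by move=> i t; exists i => j /negbTE; rewrite /al => ->.
pose E : classical_sets.set R := (fun v : R => exists alpha S, is_contract alpha /\ single_agent alpha /\
             is_NE f c own alpha S /\ v = principal_util f alpha S).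
have Emem : forall i t (B : {set T}), 0 <= t <= 1 -> B \subset acts own i ->
   (forall B' : {set T}, B' \subset acts own i -> t * f B' - cost c B' <= t * f B - cost c B) ->
   E ((1 - t) * f B).
  move=> i t B ht HB Hmax; exists (al i t), B; split; first exact: contract_al.
  split; first exact: single_al.
  split; first exact: NE_al.
  by rewrite /principal_util sum_al.
have Eub : forall v, E v -> v <= 1.
  move=> v [alpha [S [Hc [_ [_ ->]]]]]; rewrite /principal_util.
  have : 0 <= \sum_i alpha i by apply: sumr_ge0 => i _; case/andP: (Hc i).
  have := f_ge0 S; have := f_le1 S; nra.
have E0 : exists2 v, E v & 0 <= v.
  have [B HB Hmax] := BR i0 0.
  exists ((1 - 0) * f B); first by apply: (Emem i0) => //; rewrite lexx ler01.
  by rewrite subr0 mul1r.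

have Ehas : classical_sets.has_sup E.
  split; first by case: E0 => v Ev _; exists v.
  by exists 1 => v Ev; apply: Eub.
have bench : forall q, (forall v, E v -> v <= q) ->
   forall (a : 'I_n -> R) (S : {set T}), is_contract a -> is_NE f c own a S ->
   principal_util f a S <= 38 * n%:R * q.
  move=> q Hq a S Ha HNE.
  have q0 : 0 <= q by case: E0 => v Ev v0; apply: le_trans v0 (Hq v Ev).
  have a0 : forall i, 0 <= a i by move=> i; case/andP: (Ha i).
  have a1 : forall i, a i <= 1 by move=> i; case/andP: (Ha i).
  set P := 1 - \sum_i a i.
  rewrite /principal_util -/P.
  have n0 : 0 <= n%:R :> R by [].
  have [P0|Ppos] := lerP P 0.
    have := f_ge0 S; nra.
  have L1 : forall (i : 'I_n) (t : R) (B : {set T}), B \subset acts own i ->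
     (forall B' : {set T}, B' \subset acts own i -> t * f B' - cost c B' <= t * f B - cost c B) ->
     t * f (S :&: acts own i) - a i * f S <= t * f B - a i * f ((S :\: acts own i) :|: B).
    move=> i t B HB Hmax.
    have H1 := HNE i B HB; rewrite /agent_util in H1.
    have E1 : ((S :\: acts own i) :|: B) :&: acts own i = B.
      apply/setP => x; rewrite in_setI in_setU in_setD.
      case xA: (x \in acts own i); case xB: (x \in B); rewrite ?andbT ?andbF ?orbT ?orbF //.
      by have := subsetP HB x xB; rewrite xA.
    rewrite E1 in H1.
    have H2 := Hmax (S :&: acts own i) (subsetIr _ _).
    lra.
  have Qb : forall (i : 'I_n) (t : R) (B : {set T}), 0 <= t <= 1 -> B \subset acts own i ->
     (forall B' : {set T}, B' \subset acts own i -> t * f B' - cost c B' <= t * f B - cost c B) ->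
     (1 - t) * f B <= q.
    by move=> i t B ht HB Hmax; apply: Hq; apply: (Emem i).
  have subI : forall i, f S <= f (S :\: acts own i) + f (S :&: acts own i).
    by move=> i; have := fsub (S :\: acts own i) (S :&: acts own i); rewrite setUC setID.
  pose k := [arg max_(i > i0) a i]%O.
  have kmax : forall i, a i <= a k.
    by rewrite /k; case: (@arg_maxP _ _ 'I_n i0 xpredT a isT) => j _ Hj i; apply: Hj.
  have sum_k : a k <= \sum_i a i.
    rewrite (bigD1 k) //= ler_wpDr //; by apply: sumr_ge0 => j _; apply: a0.
  have sum_ik : forall i, i != k -> a i + a k <= \sum_i a i.
    move=> i ik; rewrite (bigD1 k) //= (bigD1 i) //=.
    have hs : 0 <= \sum_(j | (j != k) && (j != i)) a j by apply: sumr_ge0 => j _; apply: a0.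
    lra.
  have other : forall i, i != k -> f (S :&: acts own i) <= 12 * q.
    move=> i ik.
    have ai : a i <= 1/2.
      have := sum_ik i ik; have := kmax i; rewrite /P in Ppos; lra.
    have [B HB Hmax] := BR i (3/4).
    have := L1 i (3/4) B HB Hmax.
    have := Qb i (3/4) B ltac:(lra) HB Hmax.
    have := fmono (S :\: acts own i) ((S :\: acts own i) :|: B) (subsetUl _ _).
    have := subI i.
    have := a0 i; have := f_ge0 B; have := f_ge0 (S :&: acts own i).
    nra.
  have kb : P * f (S :&: acts own k) <= 2 * q + 2 * (f S - f (S :&: acts own k)).
    have ht : 0 <= a k + P / 2 <= 1 by have := a0 k; rewrite /P in Ppos *; lra.
    have [B HB Hmax] := BR k (a k + P / 2).
    have := L1 k (a k + P / 2) B HB Hmax.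
    have := Qb k (a k + P / 2) B ht HB Hmax.
    have := fmono B ((S :\: acts own k) :|: B) (subsetUr _ _).
    have := fmono (S :&: acts own k) S (subsetIl _ _).
    have := a0 k; have := a1 k; have := f_ge0 B; have := f_ge0 (S :&: acts own k).
    have : a k <= 1 - P by rewrite /P; lra.
    nra.
  have Ueq : S :\: acts own k = \bigcup_(i | i != k) (S :&: acts own i).
    apply/setP => x; apply/idP/bigcupP.
      rewrite in_setD => /andP[nA xS]; exists (own x).
        by move: nA; rewrite inE.
      by rewrite in_setI xS inE eqxx.
    case=> i ik; rewrite in_setI => /andP[xS]; rewrite inE => /eqP oi.
    by rewrite in_setD xS inE oi ik.
  have Ub : f (S :\: acts own k) <= \sum_(i | i != k) f (S :&: acts own i).
    rewrite Ueq.
    apply: (big_ind2 (fun U x => f U <= x)); first by rewrite f0.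
      by move=> U1 x1 U2 x2 h1 h2; apply: le_trans (fsub U1 U2) _; apply: lerD.
    by move=> i _.
  have Sb : \sum_(i | i != k) f (S :&: acts own i) <= 12 * q * n%:R.
    apply: le_trans (_ : \sum_(i | i != k) (12 * q) <= _).
      by apply: ler_sum => i ik; apply: other.
    apply: le_trans (_ : \sum_i (12 * q) <= _).
      rewrite [X in _ <= X](bigD1 k) //= ler_wpDl //; lra.
    rewrite sumr_const (_ : #|_| = n) ?mulr_natr //. by rewrite -[X in _ = X](card_ord n); apply: eq_card.
  have := subI k.
  have := fmono (S :&: acts own k) S (subsetIl _ _).
  have : P <= 1.
    rewrite /P; have : 0 <= \sum_i a i by apply: sumr_ge0 => j _; apply: a0.
    lra.
  have : 1 <= n%:R :> R by rewrite ler1n.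
  nra.
have hs0 : 0 < 2 :> R by [].
have [v0 Ev0 [v0ge0 v0s]] : exists2 v0, E v0 & 0 <= v0 /\ sup E / 2 <= v0.
  case: (lerP (sup E) 0) => s0.
    case: E0 => v Ev v0; exists v => //; split => //; lra.
  have e0 : 0 < sup E / 2 by lra.
  case: (sup_adherent e0 Ehas) => v Ev hv; exists v => //; split; lra.
move: v0s v0ge0; case: Ev0 => alpha [S [Hc [Hs [HN ->]]]] v0s v0ge0.
exists alpha, S; split => //; split => //; split => // a' S' Ha' HN'.
have hb := bench (sup E) (fun v Ev => sup_upper_bound Ehas Ev) a' S' Ha' HN'.
have hpos : 0 < (76 * n)%:R :> R by rewrite ltr0n muln_gt0.
rewrite -(ler_pM2l hpos) mulrA mulfV ?gt_eqF // mul1r natrM.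
have : 1 <= n%:R :> R by rewrite ler1n.
move: hb; set s := sup E; set u := principal_util f alpha S.
move: v0s v0ge0; rewrite -/s -/u; nra.
Qed.
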